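(* Let $\beta>0$ and $0<k<\frac{3}{3+\beta}$. Let \[f_{+-}(x,y,z)=\beta(x^2y^2+y^2z^2+x^2z^2)+\Big(x^2+y^2+z^2-\tfrac12\Big)^2-\tfrac{1-k}{4}.\] Then the zero set $Q^{+-}(k)=\{(x,y,z)\in\mathbb{R}^3: f_{+-}(x,y,z)=0\}$ is the disjoint union of two embedded compact connected components, each invariant under the octahedral group $O_h$ and each homeomorphic to a sphere.
   Context: $O_h$ denotes the octahedral group of order 48, i.e. the group of all $3\times 3$ signed permutation matrices acting on $\mathbb{R}^3$; $f_{+-}$ is $O_h$-invariant. *)

(* Defs.v *)
From HB Require Import structures.
From mathcomp Require Import all_boot all_order all_algebra all_fingroup.
From mathcomp Require Import all_classical all_reals all_analysis.
Set Implicit Arguments. Unset Strict Implicit. Unset Printing Implicit Defensive.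
Import Order.TTheory GRing.Theory Num.Theory.
Import numFieldNormedType.Exports.
Local Open Scope classical_set_scope.
Local Open Scope ring_scope.

Section Defs.
Variable R : realType.

Definition cx (p : 'rV[R]_3) : R := p ord0 0.
Definition cy (p : 'rV[R]_3) : R := p ord0 1.
Definition cz (p : 'rV[R]_3) : R := p ord0 2.

Definition fpm (beta k : R) (p : 'rV[R]_3) : R :=
  let x := cx p in let y := cy p in let z := cz p in
  beta * (x^+2 * y^+2 + y^+2 * z^+2 + x^+2 * z^+2)
  + (x^+2 + y^+2 + z^+2 - 2^-1) ^+ 2 - (1 - k) / 4.

Definition Qpm (beta k : R) : set 'rV[R]_3 := [set p | fpm beta k p = 0].

Definition sphere2 : set 'rV[R]_3 :=
  [set p | cx p ^+ 2 + cy p ^+ 2 + cz p ^+ 2 = 1].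

(* O_h: the 3x3 signed permutation matrices *)
Definition signed_perm_mx (M : 'M[R]_3) : Prop :=
  exists (s : 'S_3) (e : 'I_3 -> R),
    (forall i, e i = 1 \/ e i = -1) /\
    M = \matrix_(i, j) (if s i == j then e i else 0).

Definition Oh_invariant (A : set 'rV[R]_3) : Prop :=
  forall M, signed_perm_mx M -> forall p, A p -> A (p *m M).

End Defs.

Definition homeomorphic (T U : topologicalType) (A : set T) (B : set U) : Prop :=
  exists (f : T -> U) (g : U -> T),
    set_fun A B f /\ set_fun B A g /\
    {in A, cancel f g} /\ {in B, cancel g f} /\
    {within A, continuous f} /\ {within B, continuous g}.

(* Main.v *)
Require Import Defs.
From HB Require Import structures.
From mathcomp Require Import all_boot all_order all_algebra all_fingroup.
From mathcomp Require Import all_classical all_reals all_analysis.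
From mathcomp Require Import ring lra.
Import Order.TTheory GRing.Theory Num.Theory.
Import numFieldNormedType.Exports.
Local Open Scope classical_set_scope.
Local Open Scope ring_scope.

Section S.
Variable R : realType.
Implicit Types p u : 'rV[R]_3.

Definition Nn p : R := cx p ^+ 2 + cy p ^+ 2 + cz p ^+ 2.
Definition Ss p : R := cx p ^+2 * cy p ^+2 + cy p ^+2 * cz p ^+2 + cx p ^+2 * cz p ^+2.

Lemma fpmE beta k p : fpm beta k p = beta * Ss p + (Nn p - 2^-1) ^+ 2 - (1 - k) / 4.
Proof. by []. Qed.

Lemma cxZ c p : cx (c *: p) = c * cx p. Proof. by rewrite /cx mxE. Qed.
Lemma cyZ c p : cy (c *: p) = c * cy p. Proof. by rewrite /cy mxE. Qed.
Lemma czZ c p : cz (c *: p) = c * cz p. Proof. by rewrite /cz mxE. Qed.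

Lemma NnZ c p : Nn (c *: p) = c ^+ 2 * Nn p.
Proof. rewrite /Nn cxZ cyZ czZ; ring. Qed.
Lemma SsZ c p : Ss (c *: p) = c ^+ 4 * Ss p.
Proof. rewrite /Ss cxZ cyZ czZ; ring. Qed.

Lemma Nn_sum p : Nn p = \sum_i p ord0 i ^+ 2.
Proof. rewrite !big_ord_recl big_ord0 /Nn /cx /cy /cz addr0 addrA /=.
have -> : (lift ord0 ord0 : 'I_3) = 1 by apply/val_inj.
have -> : (lift ord0 (lift ord0 (ord0 : 'I_1)) : 'I_3) = 2 by apply/val_inj.
by have -> : (ord0 : 'I_3) = 0 by apply/val_inj.
Qed.

Lemma S4_sum p : 2 * Ss p = Nn p ^+ 2 - \sum_i p ord0 i ^+ 4.
Proof. rewrite !big_ord_recl big_ord0 /Nn /Ss /cx /cy /cz /=.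
have -> : (lift ord0 ord0 : 'I_3) = 1 by apply/val_inj.
have -> : (lift ord0 (lift ord0 (ord0 : 'I_1)) : 'I_3) = 2 by apply/val_inj.
have -> : (ord0 : 'I_3) = 0 by apply/val_inj.
ring. Qed.

Lemma Ss_le p : 3 * Ss p <= Nn p ^+ 2.
Proof. rewrite /Ss /Nn. set x := cx p. set y := cy p. set z := cz p.
have h1 := sqr_ge0 (x^+2 - y^+2); have h2 := sqr_ge0 (y^+2 - z^+2);
have h3 := sqr_ge0 (x^+2 - z^+2). nra. Qed.

Lemma Nn_ge0 p : 0 <= Nn p.
Proof. rewrite /Nn; nra. Qed.
Lemma Ss_ge0 p : 0 <= Ss p.
Proof. rewrite /Ss; nra. Qed.


Variables (beta k : R).
Hypotheses (hb : 0 < beta) (hk0 : 0 < k) (hk' : k * (3 + beta) < 3).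
Local Ltac lra' := have := hb; have := hk0; have := hk'; move=> *; lra.
Local Ltac nra' := have := hb; have := hk0; have := hk'; move=> *; nra.

Definition Aa p := Nn p ^+ 2 + beta * Ss p.
Definition hh p := 2 * Aa p - Nn p.

Lemma fpmA p : fpm beta k p = Aa p - Nn p + k / 4.
Proof. rewrite fpmE /Aa. by field. Qed.

Lemma Q_alg (S N : R) : 0 <= S -> 0 <= N -> 3 * S <= N ^+ 2 ->
  N ^+ 2 + beta * S - N + k / 4 = 0 -> [/\ 0 < N, N <= 1 & 2 * (N ^+ 2 + beta * S) - N != 0].
Proof.
move=> S0 N0 SN E.
have bS := mulr_ge0 (ltW hb) S0.
have Np : 0 < N.
  rewrite lt_neqAle N0 andbT; apply/eqP => N0'.
  rewrite -N0' in E; rewrite expr0n /= in E. lra'.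
split => //; first nra'.
apply/eqP => H.
have EN : N = k / 2 by nra'.
rewrite EN in E SN H.
have : beta * S <= beta * ((k/2)^+2 / 3) by rewrite ler_pM2l //; lra'.
nra'.
Qed.

Lemma Q_facts p : Qpm beta k p -> [/\ 0 < Nn p, Nn p <= 1 & hh p != 0].
Proof.
rewrite /Qpm /= fpmA /hh /Aa => E.
exact: Q_alg (Ss_ge0 p) (Nn_ge0 p) (Ss_le p) E.
Qed.

Definition aa u := 1 + beta * Ss u.
Definition DD u := Num.sqrt (1 - k * aa u).
Definition tt (sg : R) u := (1 + sg * DD u) / (2 * aa u).
Definition gg (sg : R) u := Num.sqrt (tt sg u) *: u.
Definition ff p := (Num.sqrt (Nn p))^-1 *: p.
Definition CC (sg : R) := [set p | Qpm beta k p /\ 0 < sg * hh p].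

Lemma sphere_facts u : sphere2 u -> [/\ 1 <= aa u, 0 < 1 - k * aa u, 0 < DD u & DD u < 1].
Proof.
rewrite /sphere2 /= => Nu.
have S0 := Ss_ge0 u; have SN := Ss_le u; 
have Nu' : Nn u = 1 by [].
rewrite Nu' in SN.
have a1 : 1 <= aa u by rewrite /aa; nra'.
have S3 : 0 <= 1/3 - Ss u by lra'.
have H3 := mulr_ge0 (mulr_ge0 (ltW hk0) (ltW hb)) S3.
have ka : 0 < 1 - k * aa u.
  rewrite /aa; lra'.
split => //; first by rewrite /DD sqrtr_gt0.
have := mulr_gt0 hk0 (lt_le_trans ltr01 a1).
move=> Hk; rewrite /DD -[X in _ < X]sqrtr1 ltr_sqrt //; lra'.
Qed.

Lemma tt_pos sg u : sg = 1 \/ sg = -1 -> sphere2 u -> 0 < tt sg u.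
Proof.
move=> s2 /sphere_facts [a1 ka D0 D1]; rewrite /tt.
apply: divr_gt0; last lra'.
case: s2 => ->; lra'.
Qed.


Lemma sqrt_eq (x y : R) : 0 <= x -> y = x ^+ 2 -> Num.sqrt y = x.
Proof. by move=> x0 ->; rewrite sqrtr_sqr ger0_norm. Qed.

Lemma sgE (sg : R) : sg = 1 \/ sg = -1 -> sg * sg = 1.
Proof. by case=> ->; rewrite ?mulr1 ?mulrNN ?mulr1. Qed.

Lemma gg_in sg u : sg = 1 \/ sg = -1 -> sphere2 u ->
  CC sg (gg sg u) /\ ff (gg sg u) = u.
Proof.
move=> hs su; have t0 := tt_pos sg u hs su.
have [a1 ka D0 D1] := sphere_facts u su.
have Nu : Nn u = 1 by [].
have Ng : Nn (gg sg u) = tt sg u by rewrite /gg NnZ sqr_sqrtr ?Nu ?mulr1 // ltW.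
have Sg : Ss (gg sg u) = tt sg u ^+ 2 * Ss u.
  by rewrite /gg SsZ (_ : 4 = 2 * 2)%N // exprM sqr_sqrtr // ltW.
have DD2 : DD u ^+ 2 = 1 - k * aa u by rewrite sqr_sqrtr // ltW.
have a0 : aa u != 0 by apply/eqP => a0; rewrite a0 in a1; lra'.
have t2a : 2 * aa u * tt sg u = 1 + sg * DD u by rewrite /tt; field; lra'.
have ss := sgE sg hs.
split; last first.
  rewrite /ff Ng /gg scalerA mulVf ?scale1r //.
  by rewrite gt_eqF // sqrtr_gt0.
split.
  rewrite /Qpm /= fpmA /Aa Ng Sg.
  have a4 : 4 * aa u != 0 by rewrite mulf_neq0.
  apply: (mulfI a4); rewrite mulr0.
  transitivity ((2 * aa u * tt sg u) ^+ 2 - 2 * (2 * aa u * tt sg u) + k * aa u).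
    by rewrite /aa; field.
  rewrite t2a.
  transitivity ((sg * sg) * DD u ^+ 2 - 1 + k * aa u); first by ring.
  by rewrite ss DD2; ring.
rewrite /hh /Aa Ng Sg.
have -> : sg * (2 * (tt sg u ^+ 2 + beta * (tt sg u ^+ 2 * Ss u)) - tt sg u)
   = tt sg u * (sg * (2 * aa u * tt sg u - 1)) by rewrite /aa; ring.
rewrite t2a (_ : sg * (1 + sg * DD u - 1) = (sg * sg) * DD u); last by ring.
by rewrite ss mul1r mulr_gt0.
Qed.


Lemma ff_in sg p : sg = 1 \/ sg = -1 -> CC sg p ->
  sphere2 (ff p) /\ gg sg (ff p) = p.
Proof.
move=> hs [Qp hp]; have [N0 N1 h0] := Q_facts p Qp.
have E : Aa p - Nn p + k / 4 = 0 by rewrite -fpmA.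
have ss := sgE sg hs.
set c := (Num.sqrt (Nn p))^-1.
have sq0 : 0 < Num.sqrt (Nn p) by rewrite sqrtr_gt0.
have c2 : c ^+ 2 = (Nn p)^-1 by rewrite /c exprVn sqr_sqrtr // ltW.
have Nf : Nn (ff p) = 1 by rewrite /ff NnZ -/c c2 mulVf // gt_eqF.
split; first exact: Nf.
have Sf : Ss (ff p) = Ss p / (Nn p) ^+ 2.
  by rewrite /ff SsZ -/c (_ : 4 = 2 * 2)%N // exprM c2 exprVn mulrC.
have Nne : Nn p != 0 by rewrite gt_eqF.
have aN : aa (ff p) * Nn p ^+ 2 = Aa p by rewrite /aa Sf /Aa; field.
set a := aa (ff p) in aN *.
have X2 : (2 * a * Nn p - 1) ^+ 2 = 1 - k * a.
  have -> : (2 * a * Nn p - 1) ^+ 2 = 4 * a * (a * Nn p ^+ 2 - Nn p) + 1 by ring.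
  rewrite aN (_ : Aa p - Nn p = - (k / 4)); last by lra'.
  by field.
have Xp : 0 <= sg * (2 * a * Nn p - 1).
  have -> : sg * (2 * a * Nn p - 1) = sg * hh p / Nn p.
    by rewrite /hh -aN; field.
  by apply: divr_ge0; apply: ltW.
have DDe : DD (ff p) = sg * (2 * a * Nn p - 1).
  apply: sqrt_eq => //; rewrite -X2.
  transitivity ((sg * sg) * (2 * a * Nn p - 1) ^+ 2); first by rewrite ss mul1r.
  by ring.
have a0 : a != 0.
  apply/eqP => a0; move: aN; rewrite a0 mul0r /Aa => A0.
  have := Ss_ge0 p; have := sqr_ge0 (Nn p); nra'.
have te : tt sg (ff p) = Nn p.
  rewrite /tt DDe -/a.
  transitivity ((sg * sg) * (2 * a * Nn p - 1) / (2 * a) + 1 / (2 * a)).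
    by field.
  by rewrite ss mul1r; field.
rewrite /gg te /ff scalerA -/c /c mulfV ?scale1r // gt_eqF //.
Qed.


Lemma contD (T : topologicalType) (f g : T -> R) x : {for x, continuous f} -> {for x, continuous g} ->
  {for x, continuous (fun y => f y + g y)}.
Proof. exact: continuousD. Qed.
Lemma contM (T : topologicalType) (f g : T -> R) x : {for x, continuous f} -> {for x, continuous g} ->
  {for x, continuous (fun y => f y * g y)}.
Proof. exact: continuousM. Qed.
Lemma contN (T : topologicalType) (f : T -> R) x : {for x, continuous f} ->
  {for x, continuous (fun y => - f y)}.
Proof. exact: continuousN. Qed.
Lemma contC (T : topologicalType) (c : R) (x : T) : {for x, continuous (fun _ : T => c)}.
Proof. exact: cst_continuous. Qed.
Lemma contX (T : topologicalType) (f : T -> R) x : {for x, continuous f} ->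
  {for x, continuous (fun y => f y ^+ 2)}.
Proof. move=> h; exact: contM. Qed.

Lemma contV (T : topologicalType) (f : T -> R) x : f x != 0 -> {for x, continuous f} ->
  {for x, continuous (fun y => (f y)^-1)}.
Proof. move=> h1 h2; exact: continuousV. Qed.
Lemma contS (T : topologicalType) (f : T -> R) x : {for x, continuous f} ->
  {for x, continuous (fun y => Num.sqrt (f y))}.
Proof. move=> h; apply: continuous_comp h _; exact: sqrt_continuous. Qed.
Lemma contZ (f : 'rV[R]_3 -> R) x : {for x, continuous f} ->
  {for x, continuous (fun y => f y *: y)}.
Proof. move=> h; exact: continuousZ. Qed.

Lemma cx_cont : continuous (@cx R).
Proof. move=> p; exact: (@coord_continuous R 1 3 ord0 0). Qed.
Lemma cy_cont : continuous (@cy R).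
Proof. move=> p; exact: (@coord_continuous R 1 3 ord0 1). Qed.
Lemma cz_cont : continuous (@cz R).
Proof. move=> p; exact: (@coord_continuous R 1 3 ord0 2). Qed.

Ltac cont_tac := repeat first [ apply: cx_cont | apply: cy_cont | apply: cz_cont | apply: (@contC 'rV[R]_3) | apply: (@contX 'rV[R]_3) | apply: (@contD 'rV[R]_3) | apply: (@contM 'rV[R]_3) | apply: (@contN 'rV[R]_3)
   ].

Lemma Nn_cont : continuous Nn.
Proof. move=> p; rewrite /Nn; cont_tac. Qed.
Lemma Ss_cont : continuous Ss.
Proof. move=> p; rewrite /Ss; cont_tac. Qed.
Lemma hh_cont : continuous hh.
Proof.
move=> p; rewrite /hh /Aa.
apply: (@contD 'rV[R]_3); last by apply: (@contN 'rV[R]_3); exact: Nn_cont.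
apply: (@contM 'rV[R]_3); first exact: (@contC 'rV[R]_3).
apply: (@contD 'rV[R]_3); first by apply: (@contX 'rV[R]_3); exact: Nn_cont.
apply: (@contM 'rV[R]_3); first exact: (@contC 'rV[R]_3).
exact: Ss_cont.
Qed.
Lemma fpm_cont : continuous (fpm beta k).
Proof.
move=> p. have -> : fpm beta k = fun p => beta * Ss p + (Nn p - 2^-1) ^+ 2 - (1 - k) / 4.
  by apply/funext => q; rewrite fpmE.
apply: (@contD 'rV[R]_3); last exact: (@contC 'rV[R]_3).
apply: (@contD 'rV[R]_3).
  apply: (@contM 'rV[R]_3); first exact: (@contC 'rV[R]_3).
  exact: Ss_cont.
apply: (@contX 'rV[R]_3); apply: (@contD 'rV[R]_3); first exact: Nn_cont.
exact: (@contC 'rV[R]_3).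
Qed.

Lemma aa_ge1 u : 1 <= aa u.
Proof. have := Ss_ge0 u; have := mulr_ge0 (ltW hb) (Ss_ge0 u); rewrite /aa; lra'. Qed.

Lemma gg_cont sg : continuous (gg sg).
Proof.
move=> u; rewrite /gg; apply: contZ; apply: contS; rewrite /tt.
apply: contM.
  apply: contD; first exact: contC.
  apply: contM; first exact: contC.
  apply: contS; apply: contD; first exact: contC.
  apply: contN; apply: contM; first exact: contC.
  rewrite /aa; apply: contD; first exact: contC.
  by apply: contM; [exact: contC | exact: Ss_cont].
apply: contV.
  by rewrite mulf_neq0 // gt_eqF // (lt_le_trans ltr01 (aa_ge1 u)).
apply: contM; first exact: contC.
rewrite /aa; apply: contD; first exact: contC.
by apply: contM; [exact: contC | exact: Ss_cont].
Qed.

Lemma ff_cont p : 0 < Nn p -> {for p, continuous ff}.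
Proof.
move=> N0; rewrite /ff; apply: contZ; apply: contV.
  by rewrite gt_eqF // sqrtr_gt0.
apply: contS; exact: Nn_cont.
Qed.

Lemma cxD p q : cx (p + q) = cx p + cx q. Proof. by rewrite /cx mxE. Qed.
Lemma cyD p q : cy (p + q) = cy p + cy q. Proof. by rewrite /cy mxE. Qed.
Lemma czD p q : cz (p + q) = cz p + cz q. Proof. by rewrite /cz mxE. Qed.
Lemma cxN p : cx (- p) = - cx p. Proof. by rewrite /cx mxE. Qed.
Lemma cyN p : cy (- p) = - cy p. Proof. by rewrite /cy mxE. Qed.
Lemma czN p : cz (- p) = - cz p. Proof. by rewrite /cz mxE. Qed.

Definition e3 : 'rV[R]_3 := delta_mx 0 2.
Definition e1 : 'rV[R]_3 := delta_mx 0 0.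
Lemma e3E : [/\ cx e3 = 0, cy e3 = 0 & cz e3 = 1].
Proof. by rewrite /cx /cy /cz /e3 !mxE. Qed.
Lemma e1E : [/\ cx e1 = 1, cy e1 = 0 & cz e1 = 0].
Proof. by rewrite /cx /cy /cz /e1 !mxE. Qed.

Lemma rv3_eq p q : cx p = cx q -> cy p = cy q -> cz p = cz q -> p = q.
Proof.
rewrite /cx /cy /cz => h0 h1 h2; apply/rowP => i.
case: i => [[|[|[|i]]] Hi] //.
- by rewrite (_ : Ordinal Hi = 0) //; apply/val_inj.
- by rewrite (_ : Ordinal Hi = 1) //; apply/val_inj.
- by rewrite (_ : Ordinal Hi = 2) //; apply/val_inj.
Qed.

Definition Hemi (s : R) := [set u : 'rV[R]_3 | sphere2 u /\ 0 <= s * cz u].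
Definition pth (s : R) (q : 'rV[R]_3) (t : R) : 'rV[R]_3 :=
  t *: (q - cz q *: e3) + (s * Num.sqrt (1 - t ^+ 2 * (cx q ^+ 2 + cy q ^+ 2))) *: e3.

Lemma pthE s q t : [/\ cx (pth s q t) = t * cx q, cy (pth s q t) = t * cy q &
   cz (pth s q t) = s * Num.sqrt (1 - t ^+ 2 * (cx q ^+ 2 + cy q ^+ 2))].
Proof.
have [x3 y3 z3] := e3E.
rewrite /pth !(cxD, cyD, czD, cxZ, cyZ, czZ, cxN, cyN, czN) x3 y3 z3.
split; ring.
Qed.

Lemma pth_in s q t : s = 1 \/ s = -1 -> Hemi s q -> 0 <= t <= 1 -> Hemi s (pth s q t).
Proof.
move=> hs [sq zq] /andP[t0 t1].
have ss := sgE s hs.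
have [px py pz] := pthE s q t.
have sq' : cx q ^+ 2 + cy q ^+ 2 + cz q ^+ 2 = 1 := sq.
have r0 : 0 <= 1 - t ^+ 2 * (cx q ^+ 2 + cy q ^+ 2).
  have := sqr_ge0 (cz q); have := sqr_ge0 (cx q); have := sqr_ge0 (cy q).
  have : t ^+ 2 <= 1 by rewrite expr_le1.
  nra.
split.
  rewrite /sphere2 /= px py pz !exprMn sqr_sqrtr //.
  rewrite (_ : s ^+ 2 = 1); last by rewrite expr2 ss.
  ring.
rewrite pz mulrA ss mul1r; exact: sqrtr_ge0.
Qed.

Lemma pth1 s q : s = 1 \/ s = -1 -> Hemi s q -> pth s q 1 = q.
Proof.
move=> hs [sq zq]; have [px py pz] := pthE s q 1.
have sq' : cx q ^+ 2 + cy q ^+ 2 + cz q ^+ 2 = 1 := sq.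
apply: rv3_eq; rewrite ?px ?py ?mul1r //.
rewrite pz expr1n mul1r (_ : 1 - _ = cz q ^+ 2); last by rewrite -sq'; ring.
rewrite sqrtr_sqr.
case: hs => hs; rewrite hs in zq *.
  by rewrite mul1r in zq; rewrite mul1r ger0_norm.
rewrite mulN1r oppr_ge0 in zq; by rewrite ler0_norm // mulN1r opprK.
Qed.

Lemma pth0 s q : pth s q 0 = s *: e3.
Proof.
by rewrite /pth scale0r add0r expr0n /= mul0r subr0 sqrtr1 mulr1.
Qed.

Lemma contDV (f g : R -> 'rV[R]_3) x : {for x, continuous f} -> {for x, continuous g} ->
  {for x, continuous (fun y => f y + g y)}.
Proof. exact: continuousD. Qed.
Lemma contZV (f : R -> R) (a : 'rV[R]_3) x : {for x, continuous f} ->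
  {for x, continuous (fun y => f y *: a)}.
Proof. exact: continuousZr_tmp. Qed.

Lemma pth_cont s q : continuous (pth s q).
Proof.
move=> t; rewrite /pth.
apply: contDV.
  apply: contZV; exact: cvg_id.
apply: contZV; apply: (@contM R); first exact: (@contC R).
apply: (@contS R); apply: (@contD R); first exact: (@contC R).
apply: (@contN R); apply: (@contM R); last exact: (@contC R).
apply: (@contX R); exact: cvg_id.
Qed.

Lemma Hemi_connected s : s = 1 \/ s = -1 -> connected (Hemi s).
Proof.
move=> hs.
have -> : Hemi s = \bigcup_(q in Hemi s) (pth s q @` `[0, 1]).
  apply/seteqP; split => [q Hq|u [q Hq [t tI <-]]].
    exists q => //; exists 1; last exact: pth1.
    by rewrite /= in_itv /= lexx ler01.
  apply: pth_in => //; by move: tI; rewrite /= in_itv.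
apply: bigcup_connected.
  exists (s *: e3) => q Hq; exists 0; last exact: pth0.
  by rewrite /= in_itv /= lexx ler01.
move=> q Hq; apply: connected_continuous_connected; first exact: segment_connected.
apply: continuous_subspaceT; exact: pth_cont.
Qed.

Lemma sphere_connected : connected (@sphere2 R).
Proof.
have -> : @sphere2 R = Hemi 1 `|` Hemi (-1).
  apply/seteqP; split => [u su|u [[]|[]]] //.
  have [z0|z0] := lerP 0 (cz u); [left|right]; split => //; rewrite ?mul1r //.
  by rewrite mulN1r oppr_ge0 ltW.
apply: connectedU; last by apply: Hemi_connected; right.
  have [x1 y1 z1] := e1E.
  exists e1; split; split; rewrite /sphere2 /= ?x1 ?y1 ?z1 ?mulr0 //; by rewrite expr1n expr0n /= !addr0.
by apply: Hemi_connected; left.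
Qed.

Lemma Q_split p : Qpm beta k p -> CC 1 p \/ CC (-1) p.
Proof.
move=> Qp; have [_ _ h0] := Q_facts p Qp.
have [hp|hn] := ltrP 0 (hh p).
  by left; split => //; rewrite mul1r.
right; split => //; rewrite mulN1r oppr_gt0 lt_neqAle hn andbT //.
Qed.

Lemma CC_disj : CC 1 `&` CC (-1) = set0.
Proof.
apply/seteqP; split => // p [[_ h1] [_ h2]].
by rewrite mul1r in h1; rewrite mulN1r oppr_gt0 in h2; move: (lt_trans h1 h2); rewrite ltxx.
Qed.

Lemma CC_img sg : sg = 1 \/ sg = -1 -> CC sg = gg sg @` (@sphere2 R).
Proof.
move=> hs; apply/seteqP; split => [p Cp|p [u su <-]].
  have [sf gf] := ff_in sg p hs Cp.
  by exists (ff p).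
by have [] := gg_in sg u hs su.
Qed.

Lemma CC_connected sg : sg = 1 \/ sg = -1 -> connected (CC sg).
Proof.
move=> hs; rewrite CC_img //; apply: connected_continuous_connected.
  exact: sphere_connected.
apply: continuous_subspaceT; exact: gg_cont.
Qed.

Lemma CC_closedE sg : sg = 1 \/ sg = -1 -> CC sg = Qpm beta k `&` [set p | 0 <= sg * hh p].
Proof.
move=> hs; apply/seteqP; split => [p [Qp hp]|p [Qp hp]]; first by split => //; apply: ltW.
split => //; rewrite lt_neqAle hp andbT eq_sym.
have [_ _ h0] := Q_facts p Qp.
rewrite /= in hp. apply/eqP => h.
have : sg * hh p = 0 by [].
move/eqP; rewrite mulf_eq0 (negbTE h0) orbF => /eqP s0.
by case: hs; rewrite s0 => /eqP; rewrite eq_sym ?oppr_eq0 oner_eq0.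
Qed.


Lemma Q_closed : closed (Qpm beta k).
Proof.
have -> : Qpm beta k = fpm beta k @^-1` [set x | x = 0] by [].
apply: preimage_closed; last exact: closed_eq.
move=> p _; exact: fpm_cont.
Qed.

Lemma CC_closed sg : sg = 1 \/ sg = -1 -> closed (CC sg).
Proof.
move=> hs; rewrite CC_closedE //; apply: closedI; first exact: Q_closed.
have -> : [set p | 0 <= sg * hh p] = (fun p => sg * hh p) @^-1` [set x | 0 <= x] by [].
apply: preimage_closed; last exact: closed_ge.
move=> p _; apply: (@contM 'rV[R]_3); first exact: (@contC 'rV[R]_3).
exact: hh_cont.
Qed.

Lemma coord_le p (i : 'I_3) : p ord0 i ^+ 2 <= Nn p.
Proof.
rewrite Nn_sum (bigD1 i) //= lerDl; apply: sumr_ge0 => j _; exact: sqr_ge0.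
Qed.

Lemma CC_compact sg : sg = 1 \/ sg = -1 -> compact (CC sg).
Proof.
move=> hs.
have Bc : compact [set v : 'rV[R]_3 | forall i, (fun _ => `[-1, 1]%classic) i (v ord0 i)].
  exact: (@rV_compact R 3 (fun _ => `[-1, 1]%classic) (fun i => @segment_compact R (-1) 1)).
apply: (subclosed_compact (CC_closed sg hs) Bc).
move=> p [Qp _] i /=; have [N0 N1 _] := Q_facts p Qp.
have := coord_le p i; rewrite in_itv /= -ler_norml => h.
rewrite -(expr_le1 (n := 2)) // ?normr_ge0 //.
by rewrite real_normK ?num_real //; apply: le_trans h N1.
Qed.


Lemma sg_hh_neq0 sg q : sg = 1 \/ sg = -1 -> Qpm beta k q -> sg * hh q != 0.
Proof.
move=> hs Qq; have [_ _ h0] := Q_facts q Qq.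
by rewrite mulf_neq0 //; case: hs => ->; rewrite ?oppr_eq0 oner_eq0.
Qed.

Lemma shh_cont sg : continuous (fun p => sg * hh p).
Proof. move=> p; apply: (@contM 'rV[R]_3); [exact: (@contC 'rV[R]_3)|exact: hh_cont]. Qed.

Lemma CC_comp sg p : sg = 1 \/ sg = -1 -> CC sg p ->
  CC sg = connected_component (Qpm beta k) p.
Proof.
move=> hs Cp; apply/seteqP; split.
  apply: connected_component_max => //; first by move=> q [].
  exact: CC_connected.
move=> y [B [Bp BQ Bc] By].
have E : B `&` [set q | 0 < sg * hh q] = B.
  apply: Bc.
  - by exists p; split => //; case: Cp.
  - exists [set q | 0 < sg * hh q] => //.
    have -> : [set q | 0 < sg * hh q] = (fun q => sg * hh q) @^-1` [set x | x > 0] by [].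
    apply: open_comp; last exact: open_gt.
    move=> q _; exact: shh_cont.
  - exists [set q | 0 <= sg * hh q].
      have -> : [set q | 0 <= sg * hh q] = (fun q => sg * hh q) @^-1` [set x | 0 <= x] by [].
      apply: preimage_closed; last exact: closed_ge.
      move=> q _; exact: shh_cont.
    apply/seteqP; split => q [Bq hq]; split => //; rewrite /= in hq *; first exact: ltW.
    by rewrite lt_neqAle hq andbT eq_sym sg_hh_neq0 //; apply: BQ.
have : (B `&` [set q | 0 < sg * hh q]) y by rewrite E.
by move=> [_ hy]; split => //; apply: BQ.
Qed.

Lemma mulmx_sp (s : 'S_3) (e : 'I_3 -> R) p j :
  (p *m \matrix_(i, j) (if s i == j then e i else 0)) ord0 j = e (s^-1 j)%g * p ord0 (s^-1 j)%g.
Proof.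
rewrite !mxE (bigD1 (s^-1 j)%g) //= big1 ?addr0.
  by rewrite mxE permKV eqxx mulrC.
move=> i ni; rewrite mxE; case: eqP => [sij|]; last by rewrite mulr0.
by move: ni; rewrite -sij permK eqxx.
Qed.

Lemma sum_sp (s : 'S_3) (e : 'I_3 -> R) p (n : nat) :
  (forall i, e i = 1 \/ e i = -1) ->
  \sum_j ((p *m \matrix_(i, j) (if s i == j then e i else 0)) ord0 j) ^+ (2 * n)
  = \sum_j (p ord0 j) ^+ (2 * n).
Proof.
move=> he.
rewrite (reindex_inj (@perm_inj _ s)) /=.
apply: eq_bigr => j _; rewrite mulmx_sp permK exprMn exprM.
have -> : e j ^+ 2 = 1 by case: (he j) => ->; rewrite ?sqrrN expr1n.
by rewrite expr1n mul1r exprM.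
Qed.

Lemma Oh_NS M p : signed_perm_mx M -> Nn (p *m M) = Nn p /\ Ss (p *m M) = Ss p.
Proof.
move=> [s [e [he ->]]].
have hN : Nn (p *m \matrix_(i, j) (if s i == j then e i else 0)) = Nn p.
  by rewrite !Nn_sum; have := sum_sp s e p 1 he; rewrite muln1.
split => //.
have h2 : (2 : R) != 0 by rewrite pnatr_eq0.
apply: (mulfI h2); rewrite !S4_sum hN.
by have := sum_sp s e p 2 he; rewrite (_ : (2 * 2 = 4)%N) // => ->.
Qed.

Lemma CC_inv sg : Oh_invariant (CC sg).
Proof.
move=> M hM p [Qp hp]; have [hN hS] := Oh_NS M p hM.
split; first by rewrite /Qpm /= fpmE hN hS.
by rewrite /hh /Aa hN hS.
Qed.

Lemma CC_homeo sg : sg = 1 \/ sg = -1 -> homeomorphic (CC sg) (@sphere2 R).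
Proof.
move=> hs; exists ff, (gg sg); split; [|split; [|split; [|split; [|split]]]].
- by move=> p Cp; case: (ff_in sg p hs Cp).
- by move=> u su; case: (gg_in sg u hs su).
- by move=> p; rewrite inE => Cp; case: (ff_in sg p hs Cp).
- by move=> u; rewrite inE => su; case: (gg_in sg u hs su).
- apply: continuous_in_subspaceT => p; rewrite inE => -[Qp _].
  by apply: ff_cont; case: (Q_facts p Qp).
- apply: continuous_subspaceT; exact: gg_cont.
Qed.

Definition PP p : {poly R} :=
  (Aa p)%:P * ('X + 1%:P) ^+ 4 - (Nn p)%:P * ('X + 1%:P) ^+ 2 + (k / 4)%:P.

Lemma PPE p t : fpm beta k (t *: p + p) = (PP p).[t].
Proof.
rewrite /PP !(hornerD, hornerN, hornerCM, horner_exp, hornerX, hornerC) (_ : t *: p + p = (t + 1) *: p); last by rewrite scalerDl scale1r.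
rewrite fpmA /Aa NnZ SsZ; ring.
Qed.

Lemma D_nz p : Qpm beta k p -> 'D_p (fpm beta k) p != 0.
Proof.
move=> Qp.
have -> : 'D_p (fpm beta k) p = 'D_1 (horner (PP p)) 0.
  have E : (fun h : R => h^-1 *: ((fpm beta k \o shift p) (h *: p) - fpm beta k p)) =
     (fun h : R => h^-1 *: ((horner (PP p) \o shift 0) (h *: 1) - horner (PP p) 0)).
    apply/funext => h /=.
    by rewrite PPE -(PPE p 0) scale0r add0r /GRing.scale /= mulr1 addr0.
  by rewrite /derive E.
rewrite (derive_val (is_derive := is_derive_poly (PP p) 0)).
rewrite /PP !(derivD, derivB, derivN, deriv_mulC, derivC, deriv_exp, derivX) !addr0.
rewrite !(hornerD, hornerN, hornerCM, hornerMn, hornerM, horner_exp, hornerX, hornerC).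
have [_ _ h0] := Q_facts p Qp.
rewrite [X in X != 0](_ : _ = 2 * hh p); last by rewrite /hh; ring.
by rewrite mulf_neq0 // pnatr_eq0.
Qed.

Lemma e1_sphere : (@sphere2 R) e1.
Proof. have [x1 y1 z1] := e1E; rewrite /sphere2 /= x1 y1 z1 expr1n expr0n /= !addr0. done. Qed.

Lemma main_sec :
  exists C1 C2 : set 'rV[R]_3,
    Qpm beta k = C1 `|` C2 /\ C1 `&` C2 = set0 /\
    (exists p, C1 p /\ C1 = connected_component (Qpm beta k) p) /\
    (exists p, C2 p /\ C2 = connected_component (Qpm beta k) p) /\
    (forall p, Qpm beta k p -> exists v : 'rV[R]_3, 'D_v (fpm beta k) p != 0) /\
    (forall C, C = C1 \/ C = C2 ->
       compact C /\ connected C /\ Oh_invariant C /\ homeomorphic C (@sphere2 R)).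
Proof.
have hp : (1 : R) = 1 \/ (1 : R) = -1 by left.
have hn : (-1 : R) = 1 \/ (-1 : R) = -1 by right.
exists (CC 1), (CC (-1)).
split.
  apply/seteqP; split => [p Qp|p [[Qp _]|[Qp _]]] //.
  by case: (Q_split p Qp) => h; [left|right].
split; first exact: CC_disj.
split.
  exists (gg 1 e1); have [C _] := gg_in 1 e1 hp e1_sphere.
  by split => //; apply: CC_comp.
split.
  exists (gg (-1) e1); have [C _] := gg_in (-1) e1 hn e1_sphere.
  by split => //; apply: CC_comp.
split.
  by move=> p Qp; exists p; apply: D_nz.
move=> C [->|->].
  split; first exact: CC_compact.
  split; first exact: CC_connected.
  split; first exact: CC_inv.
  exact: CC_homeo.
split; first exact: CC_compact.
split; first exact: CC_connected.
split; first exact: CC_inv.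
exact: CC_homeo.
Qed.
End S.

Theorem lemma3 (R : realType) (beta k : R) :
  0 < beta -> 0 < k -> k < 3 / (3 + beta) ->
  exists C1 C2 : set 'rV[R]_3,
    Qpm beta k = C1 `|` C2 /\ C1 `&` C2 = set0 /\
    (exists p, C1 p /\ C1 = connected_component (Qpm beta k) p) /\
    (exists p, C2 p /\ C2 = connected_component (Qpm beta k) p) /\
    (* 0 is a regular value of f_{+-} on Q^{+-}(k): smooth embedded surfaces *)
    (forall p, Qpm beta k p -> exists v : 'rV[R]_3, 'D_v (fpm beta k) p != 0) /\
    (forall C, C = C1 \/ C = C2 ->
       compact C /\ connected C /\ Oh_invariant C /\ homeomorphic C (@sphere2 R)).
Proof.
move=> hb hk0 hk.
have h3 : 0 < 3 + beta by apply: addr_gt0.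
have hk' : k * (3 + beta) < 3 by rewrite -ltr_pdivlMr.
eapply main_sec; eassumption.
Qed.
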